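(* Let $X$ be a random variable taking values in $\mathbb{R}^n$ with a density $f$ with respect to Lebesgue measure, let $\varphi:\mathbb{R}^n\to\mathbb{R}$ be a measurable function, and let $a,b>0$. Assume $\mathbb{E}\, e^{\alpha\varphi(X)}<\infty$ for all $\alpha\in(-a,b)$. Let $c:(-a,b)\to\mathbb{R}$ be a smooth function such that the function $\alpha\mapsto e^{-c(\alpha)}\,\mathbb{E}\, e^{\alpha\varphi(X)}$ is log-concave on $(-a,b)$. Then for every $\alpha\in(-a,b)$, $$\mathbb{E}\, e^{\alpha(\varphi(X)-\mathbb{E}\varphi(X))}\le e^{\psi_c(\alpha)},\qquad\text{where } \psi_c(\alpha)=c(\alpha)-c(0)-c'(0)\alpha.$$
   Context: A function $g:I\to(0,\infty)$ on an interval $I$ is log-concave if $\log g$ is concave on $I$. *)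

(* Defs.v *)
From HB Require Import structures.
From mathcomp Require Import all_boot all_order all_algebra.
From mathcomp Require Import all_classical all_reals all_analysis.
Set Implicit Arguments. Unset Strict Implicit. Unset Printing Implicit Defensive.
Import Order.TTheory GRing.Theory Num.Theory.
Import numFieldNormedType.Exports.
Local Open Scope classical_set_scope.
Local Open Scope ring_scope.

(* R^n is modelled as n.-tuple R with its product (= Borel) sigma-algebra.
   [is_lebesgue_n lam] : lam is Lebesgue measure on R^n, i.e. it assigns
   to every half-open box [a,b) its volume prod_i (b_i - a_i)
   (this determines the measure uniquely on the Borel sets). *)
Definition is_lebesgue_n (R : realType) (n : nat)
    (lam : {measure set (n.-tuple R) -> \bar R}) : Prop :=
  forall a b : n.-tuple R, (forall i, tnth a i <= tnth b i) ->
    lam [set x | forall i, tnth a i <= tnth x i < tnth b i] =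
    (\prod_(i < n) (tnth b i - tnth a i))%:E.

Definition has_density d (T : measurableType d) (R : realType) (n : nat)
    (P : probability T R) (lam : {measure set (n.-tuple R) -> \bar R})
    (X : T -> n.-tuple R) (f : n.-tuple R -> R) : Prop :=
  measurable_fun setT f /\ (forall x, 0 <= f x) /\
  forall A : set (n.-tuple R), measurable A ->
    P (X @^-1` A) = (\int[lam]_(x in A) (f x)%:E)%E.

Definition smooth_on (R : realType) (I : set R) (c : R -> R) : Prop :=
  forall (k : nat) (x : R), I x -> derivable (iter k (@derive1 R R) c) x 1.

Definition log_concave_on (R : realType) (I : set R) (g : R -> R) : Prop :=
  (forall x, I x -> 0 < g x) /\
  (forall x y t : R, I x -> I y -> 0 <= t <= 1 ->
     t * ln (g x) + (1 - t) * ln (g y) <= ln (g (t * x + (1 - t) * y))).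

(* Main.v *)
Require Import Defs.
From HB Require Import structures.
From mathcomp Require Import all_boot all_order all_algebra.
From mathcomp Require Import all_classical all_reals all_analysis.
From mathcomp Require Import ring lra measurable_realfun.
Import Order.TTheory GRing.Theory Num.Theory.
Import numFieldNormedType.Exports.
Local Open Scope classical_set_scope.
Local Open Scope ring_scope.

Lemma step1 (R : realType) (a0 b0 m c0 ha hb cb al be t : R) :
  al * be < 0 -> t * (be - al) = be ->
  t * ha + (1 - t) * hb <= - c0 ->
  be * m - cb <= hb ->
  ha <= - c0 + al * m - al * ((cb - c0) / be).
Proof.
move=> albe tdef conc hbge.
have be0 : be != 0 by apply/eqP => be0; move: albe; rewrite be0 mulr0 ltxx.
have P1 : (be - al) * (t * ha + (1 - t) * hb) = be * ha - al * hb.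
  by rewrite mulrDr mulrA (mulrC _ t) tdef mulrA mulrBr mulr1 (mulrC _ t) tdef; ring.
have E : al * ((cb - c0) / be) * be = al * (cb - c0) by rewrite -mulrA mulfVK.
have [alp|aln|al0] := ltrgt0P al.
- have ben : be < 0 by rewrite -(pmulr_rlt0 _ alp).
  have : (be - al) * (t * ha + (1 - t) * hb) >= (be - al) * (- c0).
    by rewrite ler_wnM2l // ?conc // subr_le0 ltW // (lt_trans ben).
  rewrite P1 => H.
  rewrite -(ler_nM2r ben) .
  nra.
- have bep : 0 < be by rewrite -(nmulr_rlt0 _ aln).
  have : (be - al) * (t * ha + (1 - t) * hb) <= (be - al) * (- c0).
    by rewrite ler_wpM2l // subr_ge0 ltW // (lt_trans aln).
  rewrite P1 => H.
  rewrite -(ler_pM2r bep) .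
  nra.
- by move: albe; rewrite al0 mul0r ltxx.
Qed.

Lemma key (R : realType) (a b m cd : R) (c h : R -> R) (al : R) :
  0 < a -> 0 < b -> - a < al < b ->
  (forall x y t : R, - a < x < b -> - a < y < b -> 0 <= t <= 1 ->
     t * h x + (1 - t) * h y <= h (t * x + (1 - t) * y)) ->
  h 0 = - c 0 ->
  (forall be : R, - a < be < b -> be * m - c be <= h be) ->
  (forall e : R, 0 < e -> exists2 d : R, 0 < d &
     forall t : R, `|t| < d -> t != 0 -> `|cd - (c t - c 0) / t| < e) ->
  h al <= - c 0 + al * m - al * cd.
Proof.
move=> a0 b0 alI conc h0 jen der.
have [al0|al0] := eqVneq al 0.
  by rewrite al0 h0 !mul0r subr0 addr0.
have H1 : forall be, - a < be < b -> al * be < 0 ->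
    h al <= - c 0 + al * m - al * ((c be - c 0) / be).
  move=> be beI albe.
  have bal : be - al != 0.
    apply/eqP => e; have : be = al by apply/eqP; rewrite -subr_eq0 e.
    by move=> E; move: albe; rewrite E; nra.
  set t := be / (be - al).
  have tdef : t * (be - al) = be by rewrite /t divfK.
  have t01 : 0 <= t <= 1 by apply/andP; split; nra.
  have := conc al be t alI beI t01.
  have -> : t * al + (1 - t) * be = 0 by nra.
  rewrite h0 => C.
  apply: (@step1 R a b m (c 0) (h al) (h be) (c be) al be t albe tdef C).
  exact: jen.
apply/ler_addgt0Pr => e e0; move: e e0 => /= e e0.
have ale : 0 < `|al| by rewrite normr_gt0.
have [d d0 Hd] := der (e / `|al|) (divr_gt0 e0 ale).
set r := Num.min d (Num.min a b) / 2.
have r0 : 0 < r by rewrite /r divr_gt0 // lt_min d0 lt_min a0 b0.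
have rd : r < d /\ r < a /\ r < b.
  have := ge_min d d (Num.min a b); rewrite lexx /= => md.
  have := ge_min (Num.min a b) d (Num.min a b); rewrite lexx orbT /= => mab.
  have := ge_min a a b; rewrite lexx /= => ma.
  have := ge_min b a b; rewrite lexx orbT /= => mb.
  rewrite /r; lra.
have [be [beI [albe bed]]] : exists be, [/\ - a < be < b, al * be < 0 & `|be| < d].
  have [alp|aln|al00] := ltrgt0P al.
  - exists (- r); split; first (apply/andP; split; lra).
      nra.
    by rewrite normrN gtr0_norm //; lra.
  - exists r; split; first (apply/andP; split; lra).
      nra.
    by rewrite gtr0_norm //; lra.
  - by move: al0; rewrite al00 eqxx.
have be0 : be != 0 by apply/eqP => E; move: albe; rewrite E mulr0 ltxx.
have := Hd be bed be0.
set q := (c be - c 0) / be => H2.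
have H3 := H1 be beI albe; rewrite -/q in H3.
have : al * (cd - q) <= e.
  rewrite (le_trans (ler_norm _)) // normrM.
  by rewrite ltW // mulrC -ltr_pdivlMr.
rewrite mulrBr => HH.
clearbody r q; lra.
Qed.

Lemma itvI (R : realType) (a b x : R) : - a < x < b -> [set` `]- a, b[] x.
Proof. by move=> H; rewrite /= in_itv /=. Qed.
Arguments itvI {R a b x}.

Lemma abs_le_exp (R : realType) (s y : R) : 0 < s ->
  `|y| <= s^-1 * (expR (s * y) + expR (- s * y)).
Proof.
move=> s0; rewrite -ler_pdivrMl ?invr_gt0 // invrK mulNr.
have h1 := expR_ge1Dx (s * y); have h2 := expR_ge1Dx (- (s * y)).
have h3 := expR_ge0 (s * y); have h4 := expR_ge0 (- (s * y)).
have [y0|y0] := leP 0 y.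
  by rewrite ger0_norm //; nra.
by rewrite ltr0_norm // mulrN; nra.
Qed.

Theorem lemma2p3 (d : measure_display) (T : measurableType d) (R : realType)
  (P : probability T R) (n : nat)
  (lam : {measure set (n.-tuple R) -> \bar R})
  (X : T -> n.-tuple R) (f : n.-tuple R -> R) (phi : n.-tuple R -> R)
  (a b : R) (c : R -> R) :
  is_lebesgue_n lam ->
  measurable_fun setT X ->
  has_density P lam X f ->
  measurable_fun setT phi ->
  0 < a -> 0 < b ->
  (forall al : R, - a < al < b ->
     ('E_P[fun w => expR (al * phi (X w))] < +oo)%E) ->
  smooth_on `]- a, b[ c ->
  log_concave_on `]- a, b[
    (fun al => expR (- c al) * fine 'E_P[fun w => expR (al * phi (X w))]) ->
  forall al : R, - a < al < b ->
    ('E_P[fun w => expR (al * (phi (X w) - fine 'E_P[fun w => phi (X w)]))]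
      <= (expR (c al - c 0 - derive1 c 0 * al))%:E)%E.
Proof.
move=> _ mX _ mphi a0 b0 Efin sm LC al alI.
have mY : measurable_fun setT (fun w => phi (X w)) := measurableT_comp mphi mX.
have mE : forall be : R, measurable_fun setT (fun w => expR (be * phi (X w))).
  move=> be; apply: measurableT_comp; first exact: measurable_expR.
  exact: measurable_funM.
have EEfin : forall be : R, - a < be < b ->
    ('E_P[fun w => expR (be * phi (X w))] = (fine 'E_P[fun w => expR (be * phi (X w))])%:E)%E.
  move=> be beI; rewrite fineK // ge0_fin_numE ?Efin //.
  by apply: expectation_ge0 => w; exact: expR_ge0.
have LE : forall be : R, - a < be < b ->
    (fun w => expR (be * phi (X w))) \in Lfun P 1.
  move=> be beI; apply/Lfun1_integrable/integrableP; split.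
    exact/measurable_EFinP.
  under eq_integral => w _ do rewrite /comp abse_EFin ger0_norm ?expR_ge0 //.
  by have := Efin be beI; rewrite unlock.
pose s := Num.min a b / 2.
have s0 : 0 < s by rewrite /s divr_gt0 // lt_min a0 b0.
have sab : s < a /\ s < b.
  have := ge_min a a b; rewrite lexx /= => ma.
  have := ge_min b a b; rewrite lexx orbT /= => mb.
  rewrite /s; lra.
have sI : - a < s < b by apply/andP; split; lra.
have sI' : - a < - s < b by apply/andP; split; lra.
have LY : (fun w => phi (X w)) \in Lfun P 1.
  apply/Lfun1_integrable.
  have Lg : s^-1 \o* ((fun w => expR (s * phi (X w))) \+ (fun w => expR (- s * phi (X w))))
      \in Lfun P 1.
    by apply: Lfun_scale => //; apply: rpredD; apply: LE.
  move/Lfun1_integrable : Lg => Lg.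
  apply: (le_integrable measurableT _ _ Lg); first exact/measurable_EFinP.
  move=> w _ /=; rewrite lee_fin.
  rewrite [X in _ <= X]ger0_norm.
    by rewrite mulrC; exact: abs_le_exp.
  by rewrite mulr_ge0 ?invr_ge0 ?addr_ge0 ?expR_ge0 // ltW.
pose m := fine 'E_P[fun w => phi (X w)].
have EYm : ('E_P[fun w => phi (X w)] = m%:E)%E.
  by rewrite /m fineK //; exact: expectation_fin_num.
pose M := fun be : R => fine 'E_P[fun w => expR (be * phi (X w))].
have F : forall be : R, - a < be < b ->
    ('E_P[fun w => expR (be * (phi (X w) - m))] = (expR (- (be * m)) * M be)%:E)%E.
  move=> be beI.
  have -> : (fun w => expR (be * (phi (X w) - m))) =
      expR (- (be * m)) \o* (fun w => expR (be * phi (X w))).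
    by apply/funext => w /=; rewrite mulrBr -expRD addrC.
  by rewrite expectationZl ?LE // EEfin // EFinM.
have J : forall be : R, - a < be < b -> 1 <= expR (- (be * m)) * M be.
  move=> be beI; rewrite -lee_fin -F //.
  have -> : (1 = 'E_P[(cst 1 \+ be \o* ((fun w => phi (X w)) \- cst m))%R])%E.
    rewrite expectationD ?Lfun_cst //; last first.
      by apply: Lfun_scale => //; apply: rpredB => //; exact: Lfun_cst.
    rewrite expectation_cst expectationZl; last by apply: rpredB => //; exact: Lfun_cst.
    by rewrite expectationB ?Lfun_cst // EYm expectation_cst -EFinB subrr mule0 adde0.
  rewrite unlock; apply: le_integral => //.
  - apply: (@Lfun1_integrable _ _ _ P (cst 1 \+ be \o* ((fun w => phi (X w)) \- cst m))%R).1.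
    apply: rpredD; first exact: Lfun_cst.
    by apply: Lfun_scale => //; apply: rpredB => //; exact: Lfun_cst.
  - apply: (@Lfun1_integrable _ _ _ P (fun x => expR (be * (phi (X x) - m)))).1.
    have -> : (fun w => expR (be * (phi (X w) - m))) =
      expR (- (be * m)) \o* (fun w => expR (be * phi (X w))).
      by apply/funext => w /=; rewrite mulrBr -expRD addrC.
    by apply: Lfun_scale => //; exact: LE.
  - move=> w _ /=; rewrite lee_fin.
    have := expR_ge1Dx (be * (phi (X w) - m)).
    by rewrite mulrC.
have I0 : - a < 0 < b by apply/andP; split; lra.
have Mpos : forall x : R, - a < x < b -> 0 < M x.
  move=> x Hx; have := LC.1 x (itvI Hx).
  by rewrite pmulr_rgt0 ?expR_gt0.
have M0 : M 0 = 1.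
  rewrite /M; have -> : (fun w => expR (0 * phi (X w))) = cst 1.
    by apply/funext => w; rewrite mul0r expR0.
  by rewrite expectation_cst.
pose h := fun x : R => ln (expR (- c x) * M x).
have hE : forall x : R, - a < x < b -> h x = - c x + ln (M x).
  by move=> x Hx; rewrite /h lnM ?posrE ?expR_gt0 ?Mpos // expRK.
have der : forall e : R, 0 < e -> exists2 d0 : R, 0 < d0 &
     forall t : R, `|t| < d0 -> t != 0 -> `|derive1 c 0 - (c t - c 0) / t| < e.
  have dc : derivable c 0 1 by have := sm 0%N 0 (itvI I0).
  have cv : (fun h => h^-1 *: (c (h + 0) - c 0)) @ 0^' --> derive1 c 0.
    rewrite /derive1.
    have -> : (fun h => h^-1 *: (c (h + 0) - c 0)) =
              (fun h => h^-1 *: ((c \o shift 0) (h *: 1) - c 0)).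
      by apply/funext => t /=; rewrite -[t%:A]/(t * 1) mulr1.
    exact: dc.
  move=> e e0; move/cvgrPdist_lt : cv => /(_ e e0) /nbhs_normP [d0 d00 Hd].
  exists d0 => // t td t0.
  have := Hd t; rewrite /= sub0r normrN addr0 => /(_ td t0).
  by rewrite mulrC.
have conc : forall x y t : R, - a < x < b -> - a < y < b -> 0 <= t <= 1 ->
     t * h x + (1 - t) * h y <= h (t * x + (1 - t) * y).
  by move=> x y t Hx Hy Ht; exact: LC.2 x y t (itvI Hx) (itvI Hy) Ht.
have h0 : h 0 = - c 0 by rewrite /h M0 mulr1 expRK.
have jen : forall be : R, - a < be < b -> be * m - c be <= h be.
  move=> be beI; rewrite hE //.
  have : be * m <= ln (M be).
    rewrite -ler_expR lnK ?posrE ?Mpos //.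
    have := J be beI.
    rewrite -(ler_pM2l (expR_gt0 (be * m))) mulr1 mulrA -expRD subrr expR0 mul1r.
    by [].
  lra.
have K := @key R a b m (derive1 c 0) c h al a0 b0 alI conc h0 jen der.
rewrite -/m F // lee_fin.
rewrite -[M al](@lnK R) ?posrE ?Mpos // -expRD ler_expR.
move: K; rewrite hE //.
rewrite (mulrC (derive1 c 0)).
lra.
Qed.
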